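(* Let $\epsilon>0$. Define the randomized mechanism $\mathcal{M}$ (the BiSample mechanism) with input $v\in[-1,1]$ as follows: sample $s\in\{0,1\}$ uniformly at random; if $s=0$, generate a Bernoulli variable $b\in\{0,1\}$ with $$\Pr[b=1]=\frac{1-e^{\epsilon}}{1+e^{\epsilon}}\cdot\frac{v}{2}+\frac12;$$ if $s=1$, generate a Bernoulli variable $b\in\{0,1\}$ with $$\Pr[b=1]=\frac{e^{\epsilon}-1}{e^{\epsilon}+1}\cdot\frac{v}{2}+\frac12;$$ and output the pair $\langle s,b\rangle$. Then $\mathcal{M}$ satisfies $\epsilon$-local differential privacy, i.e. for all $t_1,t_2\in[-1,1]$ and every output $o\in\{0,1\}\times\{0,1\}$, $$\Pr[\mathcal{M}(t_1)=o]\le e^{\epsilon}\cdot\Pr[\mathcal{M}(t_2)=o].$$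
   Context: A randomized mechanism $\mathcal{M}$ satisfies $\epsilon$-local differential privacy ($\epsilon$-LDP) if for every two inputs $t_1,t_2$ in its domain and every output $t^*$ in its range, $\Pr[\mathcal{M}(t_1)=t^*]\le \exp(\epsilon)\Pr[\mathcal{M}(t_2)=t^*]$. *)

(* Defs.v *)
From Stdlib Require Import Reals.
Open Scope R_scope.

Definition bisample_p1 (eps v : R) (s : bool) : R :=
  if s then (exp eps - 1) / (exp eps + 1) * (v / 2) + 1 / 2
  else (1 - exp eps) / (1 + exp eps) * (v / 2) + 1 / 2.

(* Output distribution of the BiSample mechanism on input v:
   Pr[M(v) = <s,b>] = Pr[s] * Pr[b | s], with s uniform on {0,1}.
   Bits are encoded as bool (false = 0, true = 1). *)
Definition bisample_prob (eps v : R) (o : bool * bool) : R :=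
  let (s, b) := o in
  (1 / 2) * (if b then bisample_p1 eps v s else 1 - bisample_p1 eps v s).

(* Main.v *)
Require Import Defs.
From Stdlib Require Import Reals Lra.
Open Scope R_scope.

Lemma bnd (E v k : R) : 1 < E -> -1 <= v <= 1 -> (k = 1 \/ k = -1) ->
  / (E + 1) <= 1/2 + k * ((E - 1) / (E + 1)) * (v / 2) <= E * / (E + 1).
Proof.
  intros HE Hv Hk.
  assert (Hp : 0 < E + 1) by lra.
  set (u := / (E + 1)).
  assert (Hu : u * (E + 1) = 1) by (unfold u; field; lra).
  assert (Hu0 : 0 < u) by (unfold u; apply Rinv_0_lt_compat; lra).
  replace ((E - 1) / (E + 1)) with ((E - 1) * u) by (unfold u, Rdiv; ring).
  assert (A : 0 <= u * ((E - 1) * (1 + v))) by (apply Rmult_le_pos; [lra| apply Rmult_le_pos; lra]).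
  assert (B : 0 <= u * ((E - 1) * (1 - v))) by (apply Rmult_le_pos; [lra| apply Rmult_le_pos; lra]).
  destruct Hk as [-> | ->]; split; nra.
Qed.

Theorem theorem1 (eps : R) (heps : 0 < eps) :
  forall t1 t2 : R, -1 <= t1 <= 1 -> -1 <= t2 <= 1 ->
  forall o : bool * bool,
    bisample_prob eps t1 o <= exp eps * bisample_prob eps t2 o.
Proof.
  intros t1 t2 H1 H2 [s b].
  assert (HE : 1 < exp eps) by (rewrite <- exp_0; apply exp_increasing; lra).
  set (E := exp eps) in *.
  assert (Hp : 0 < / (E + 1)) by (apply Rinv_0_lt_compat; lra).
  assert (Hneg : (1 - E) / (1 + E) = -1 * ((E - 1) / (E + 1)))
    by (field; lra).
  unfold bisample_prob, bisample_p1; fold E.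
  destruct s, b.
  - pose proof (bnd E t1 1 HE H1 (or_introl eq_refl)).
    pose proof (bnd E t2 1 HE H2 (or_introl eq_refl)). nra.
  - pose proof (bnd E t1 (-1) HE H1 (or_intror eq_refl)).
    pose proof (bnd E t2 (-1) HE H2 (or_intror eq_refl)). nra.
  - rewrite Hneg.
    pose proof (bnd E t1 (-1) HE H1 (or_intror eq_refl)).
    pose proof (bnd E t2 (-1) HE H2 (or_intror eq_refl)). nra.
  - rewrite Hneg.
    pose proof (bnd E t1 1 HE H1 (or_introl eq_refl)).
    pose proof (bnd E t2 1 HE H2 (or_introl eq_refl)). nra.
Qed.
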